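(* Let $K_1\subset\mathbb{R}^n$, $K_2\subset\wedge^2\mathbb{R}^n,\ldots,K_n\subset\wedge^n\mathbb{R}^n$ be proper cones. Then for every $j=2,\ldots,n$, $$\widetilde{T}(K_1,\ldots,K_j)\subseteq\operatorname{int}(T(K_1,\ldots,K_j)).$$
   Context: A proper cone is a closed convex cone that is pointed and solid; $\wedge^j\mathbb{R}^n$ is the $j$th exterior power of $\mathbb{R}^n$. Define recursively $T(K_1)=K_1\cup(-K_1)$, and for $j\ge2$, $T(K_1,\ldots,K_j)$ is the closure of the set of all $x_1\in\mathbb{R}^n$ for which there exist $x_2\in T(K_1),\ldots,x_j\in T(K_1,\ldots,K_{j-1})$ with $x_1\wedge\cdots\wedge x_j\in\operatorname{int}(K_j)\cup\operatorname{int}(-K_j)$. Similarly $\widetilde{T}(K_1)=\operatorname{int}(K_1)\cup(-\operatorname{int}(K_1))$, and for $j\ge2$, $\widetilde{T}(K_1,\ldots,K_j)$ is the set (no closure) of all $x_1\in\mathbb{R}^n$ for which there exist $x_2\in\widetilde{T}(K_1),\ldots,x_j\in\widetilde{T}(K_1,\ldots,K_{j-1})$ with $x_1\wedge\cdots\wedge x_j\in\operatorname{int}(K_j)\cup\operatorname{int}(-K_j)$. *)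

(* Defs.v *)
From HB Require Import structures.
From mathcomp Require Import all_boot all_order all_algebra.
From mathcomp Require Import all_classical all_reals all_analysis.
Set Implicit Arguments. Unset Strict Implicit. Unset Printing Implicit Defensive.
Import Order.TTheory GRing.Theory Num.Theory.
Import numFieldNormedType.Exports.
Local Open Scope classical_set_scope.
Local Open Scope ring_scope.

Definition convex_cone {R : realType} {V : normedModType R} (K : set V) : Prop :=
  K 0 /\ (forall x y, K x -> K y -> K (x + y)) /\
  (forall (a : R) x, 0 <= a -> K x -> K (a *: x)).

Definition proper_cone {R : realType} {V : normedModType R} (K : set V) : Prop :=
  [/\ closed K, convex_cone K,
      (forall x, K x -> K (- x) -> x = 0)
    & interior K !=set0 ].

Definition negset {R : realType} {V : normedModType R} (K : set V) : set V :=
  [set - y | y in K].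

(* The j-element subsets of {0,..,n-1}: they index the standard (Plücker)
   basis e_S = e_{s_1} ∧ ... ∧ e_{s_j} (s_1 < ... < s_j) of ∧^j R^n. *)
Definition ksub (n j : nat) : {set {set 'I_n}} := [set S : {set 'I_n} | #|S| == j].

(* ∧^j R^n, identified with R^{C(n,j)} via the basis e_S, S ∈ ksub n j. *)
Definition wedge_space (R : realType) (n j : nat) := 'rV[R]_(#|ksub n j|).

(* The j x j minor of the j x n matrix with rows v_0..v_{j-1}, on the columns
   of S listed increasingly. *)
Definition minor_on {R : realType} {n j : nat} (v : 'I_j -> 'rV[R]_n)
    (S : {set 'I_n}) : 'M[R]_j :=
  \matrix_(a < j, b < j)
     oapp (fun c : 'I_n => v a 0 c) 0
          (insub (nth 0%N [seq val c | c <- enum S] b) : option 'I_n).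

(* x_1 ∧ ... ∧ x_j in coordinates: the coefficient of e_S is the minor on S. *)
Definition wedge {R : realType} {n j : nat} (v : 'I_j -> 'rV[R]_n) :
    wedge_space R n j :=
  \row_(k < #|ksub n j|) \det (minor_on v (enum_val k)).

(* One step of the recursive definition: given the family P with
   P i = T(K_1,...,K_i) for 1 <= i < j, the set of x_1 such that there exist
   x_2 ∈ P 1, ..., x_j ∈ P (j-1) with x_1∧...∧x_j ∈ int(K_j) ∪ int(-K_j).
   (0-indexed: v 0 = x_1 and v i = x_{i+1} ∈ P i.) *)
Definition Tstep {R : realType} {n : nat} (P : nat -> set 'rV[R]_n)
    (Kj : forall j, set (wedge_space R n j)) (j : nat) : set 'rV[R]_n :=
  [set x | exists v : 'I_j -> 'rV[R]_n,
     [/\ forall i : 'I_j, val i = 0%N -> v i = x,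
         forall i : 'I_j, (0 < val i)%N -> P (val i) (v i)
       & (interior (Kj j) `|` interior (negset (Kj j))) (wedge v)]].

(* Tgen base post K m i = T(K_1,...,K_i) for 1 <= i <= m, where the base case
   (i = 1) is [base] and [post] is applied at each step j >= 2
   (closure for T, identity for T~). *)
Fixpoint Tgen {R : realType} {n : nat} (base : set 'rV[R]_n)
    (post : set 'rV[R]_n -> set 'rV[R]_n)
    (K : forall j, set (wedge_space R n j)) (m : nat) : nat -> set 'rV[R]_n :=
  match m with
  | 0 => fun _ => set0
  | m'.+1 => fun i =>
      if i == m'.+1 then
        (if m' == 0%N then base
         else post (Tstep (Tgen base post K m') K m'.+1))
      else Tgen base post K m' i
  end.

Definition Tset {R : realType} {n : nat} (K1 : set 'rV[R]_n)
    (K : forall j, set (wedge_space R n j)) (j : nat) : set 'rV[R]_n :=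
  Tgen (K1 `|` negset K1) closure K j j.

Definition Ttilde {R : realType} {n : nat} (K1 : set 'rV[R]_n)
    (K : forall j, set (wedge_space R n j)) (j : nat) : set 'rV[R]_n :=
  Tgen (interior K1 `|` negset (interior K1)) id K j j.

(* Main.v *)
Require Import Defs.
From HB Require Import structures.
From mathcomp Require Import all_boot all_order all_algebra.
From mathcomp Require Import all_classical all_reals all_analysis.
Import Order.TTheory GRing.Theory Num.Theory.
Import numFieldNormedType.Exports.
Local Open Scope classical_set_scope.
Local Open Scope ring_scope.

Section Aux.
Variable R : realType.

Lemma Tgen_eq n base post (K : forall j, set (wedge_space R n j)) m i :
  (i <= m)%N -> Tgen base post K m i = Tgen base post K i i.
Proof.
elim: m => [|m IH]; first by rewrite leqn0 => /eqP ->.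
move=> him; case: (eqVneq i m.+1) => [-> //|ne].
by rewrite /= (negbTE ne) IH // -ltnS ltn_neqAle ne.
Qed.

Lemma mx_cont_coord (Y : topologicalType) p q (f : Y -> 'M[R]_(p, q)) :
  (forall i j, continuous (fun y => f y i j)) -> continuous f.
Proof.
move=> hf x A /nbhs_ballP [e e0 eA].
have H : \forall y \near x, forall i, forall j, ball (f x i j) e (f y i j).
  apply: filter_forall => i; apply: filter_forall => j.
  exact: (hf i j x (ball (f x i j) e) (nbhsx_ballx _ _ e0)).
apply: filterS H => y hy; apply: eA; split => //.
Qed.

Lemma cont_sum (Y : topologicalType) k (g : 'I_k -> Y -> R) :
  (forall b, continuous (g b)) -> continuous (fun y => \sum_(b < k) g b y).
Proof.
elim: k g => [|k IH] g hg x.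
  under eq_fun do rewrite big_ord0. exact: cvg_cst.
under eq_fun do rewrite big_ord_recr /=.
idtac.
apply: cvgD; first exact: (IH (fun b => g (widen_ord (leqnSn k) b))).
exact: hg.
Qed.

Lemma det_cont (Y : topologicalType) m (M : Y -> 'M[R]_m.+1) :
  (forall b, continuous (fun y => M y 0 b)) ->
  (forall y z a b, M y (lift 0 a) b = M z (lift 0 a) b) ->
  continuous (fun y => \det (M y)).
Proof.
move=> h0 hr x.
have E : forall y, \det (M y) = \sum_b M y 0 b * cofactor (M x) 0 b.
  move=> y; rewrite (expand_det_row _ 0); apply: eq_bigr => b _.
  congr (_ * _); rewrite /cofactor; congr (_ * \det _).
  by apply/matrixP => a c; rewrite !mxE (hr y x).
under eq_fun do rewrite E.
have H : continuous (fun y => \sum_b M y 0 b * cofactor (M x) 0 b).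
  apply: cont_sum => b y.
  apply: cvgMr_tmp; exact: h0.
exact: H x.
Qed.

Lemma step_int n (P Q : nat -> set 'rV[R]_n)
    (Kj : forall j, set (wedge_space R n j)) m :
  (forall i, (0 < i)%N -> (i < m.+1)%N -> Q i `<=` P i) ->
  Tstep Q Kj m.+1 `<=` interior (Tstep P Kj m.+1).
Proof.
move=> hQP x [v [h0 hP hW]].
pose v' (y : 'rV[R]_n) := fun i : 'I_m.+1 => if val i == 0%N then y else v i.
pose g y := wedge (v' y).
set O := _ `|` _ in hW.
have oO : open O by apply: openU; exact: open_interior.
have gx : g x = wedge v.
  rewrite /g; congr wedge; apply/funext => i; rewrite /v'.
  by case: eqP => [/h0 ->|].
have cg : continuous g.
  apply: mx_cont_coord => a k; rewrite /g /wedge.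
  under eq_fun do rewrite mxE.
  apply: det_cont.
  - move=> b y; rewrite /minor_on.
    under eq_fun do rewrite mxE.
    set o := insub _; case: o => [c|] /=.
      rewrite /v' /=.
      exact: (@coord_continuous R 1 n 0 c y).
    move=> t /nbhs_singleton t0; exact: (@filterE _ (nbhs y) _ (fun _ => t 0) (fun _ => t0)).
  - by move=> y z a' b; rewrite /minor_on !mxE /v' /=.
have oU : open (g @^-1` O) by apply: open_comp => // y _; exact: cg.
have sub : g @^-1` O `<=` Tstep P Kj m.+1.
  move=> y hy; exists (v' y); split.
  - by move=> i hi; rewrite /v' hi.
  - move=> i hi; rewrite /v' gtn_eqF //; apply: hQP => //; [exact: ltn_ord | exact: hP].
  - apply hy.
move: sub; rewrite open_subsetE //; apply; by rewrite /= gx.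
Qed.

Lemma Tgen_SS n base post (K : forall j, set (wedge_space R n j)) m :
  Tgen base post K m.+2 m.+2 = post (Tstep (Tgen base post K m.+1) K m.+2).
Proof. by rewrite /= eqxx. Qed.

Lemma main_all n (K1 : set 'rV[R]_n) (K : forall j, set (wedge_space R n j)) j :
  Ttilde K1 K j `<=` Tset K1 K j /\
  ((2 <= j)%N -> Ttilde K1 K j `<=` interior (Tset K1 K j)).
Proof.
elim/ltn_ind: j => j IH.
case: j IH => [|[|m]] IH.
- by split.
- split => //= x [hx|hx]; first by left; exact: interior_subset.
  by right; case: hx => y hy <-; exists y => //; exact: interior_subset.
- have hint : Ttilde K1 K m.+2 `<=` interior (Tset K1 K m.+2).
    rewrite /Ttilde /Tset !Tgen_SS.
    apply: subset_trans (interiorS (@subset_closure _ _)).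
    apply: step_int => i i0 im y hy.
    rewrite Tgen_eq // in hy; rewrite Tgen_eq //.
    exact: ((IH i im).1 y hy).
  split => // y /hint; exact: interior_subset.
Qed.

End Aux.

Theorem theorem7 (R : realType) (n : nat) (K1 : set 'rV[R]_n)
    (K : forall j : nat, set (wedge_space R n j)) :
  proper_cone K1 ->
  (forall j : nat, (2 <= j <= n)%N -> proper_cone (K j)) ->
  forall j : nat, (2 <= j <= n)%N ->
    Ttilde K1 K j `<=` interior (Tset K1 K j).
Proof.
move=> _ _ j /andP [hj _]; exact: ((@main_all R n K1 K j).2 hj).
Qed.
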